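(* Let $C=\operatorname{conv}(\gamma_1\cup\gamma_2\cup\gamma_3\cup\gamma_4)\subset\mathbb{R}^3$, where for $t\in[0,\pi/4]$ \[ \gamma_1(t)=(0,-\sin t,\cos t-1),\ \gamma_2(t)=(0,\cos t-1,-\sin t),\ \gamma_3(t)=(-\sin t,1-\cos t,0),\ \gamma_4(t)=(\cos t-1,\sin t,0) \] (here $\gamma_i$ also denotes the image curve). Then $F=\operatorname{conv}(\gamma_3\cup\gamma_4)$ is a face of $C$ containing $0$, and $\mathcal{T}(0;C)\cap\operatorname{span}F\neq\mathcal{T}(0;F)$; specifically $g=(0,-1,0)\in\mathcal{T}(0;C)\cap\operatorname{span}F$ but $g\notin\mathcal{T}(0;F)$. Consequently the closed convex cone $K=\operatorname{cone}(C\times\{1\})\subset\mathbb{R}^4$ is not tangentially exposed (and hence, by Theorem 3.1, not facially dual complete).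
   Context: Tangent cone: $\mathcal{T}(x;D)=\operatorname{cl}\{d: x+\epsilon d\in D\text{ for some }\epsilon>0\}$. A face of a closed convex set $D$ is a closed convex $F\subseteq D$ such that $x\in F$, $y,z\in D$, $x\in(y,z)$ imply $y,z\in F$. A closed convex cone $K$ is tangentially exposed if $\mathcal{T}(x;K)\cap\operatorname{span}F=\mathcal{T}(x;F)$ for every face $F\neq K$ and every $x\in F$. $\operatorname{cone}(S)=\{\lambda s:\lambda\ge0, s\in \operatorname{conv} S\}$. Theorem 3.1 states: every facially dual complete closed convex cone (one with $K^*+F^\perp$ closed for all nonempty faces $F\ne K$) is tangentially exposed. *)

(* Defs.v *)
From Stdlib Require Import Reals.
From Stdlib Require Fin.
Open Scope R_scope.

Definition vec (n : nat) := Fin.t n -> R.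
Definition vzero {n} : vec n := fun _ => 0.
Definition vadd {n} (x y : vec n) : vec n := fun i => x i + y i.
Definition vscale {n} (a : R) (x : vec n) : vec n := fun i => a * x i.

Fixpoint dot {n : nat} : vec n -> vec n -> R :=
  match n with
  | O => fun _ _ => 0
  | S m => fun x y => x Fin.F1 * y Fin.F1 +
                      @dot m (fun i => x (Fin.FS i)) (fun i => y (Fin.FS i))
  end.

Definition set_ (n : nat) := vec n -> Prop.
Definition subset {n} (A B : set_ n) := forall x, A x -> B x.
Definition set_eq {n} (A B : set_ n) := forall x, A x <-> B x.

Definition convex {n} (D : set_ n) :=
  forall x y t, D x -> D y -> 0 <= t <= 1 -> D (vadd (vscale t x) (vscale (1 - t) y)).
Definition conv {n} (S : set_ n) : set_ n :=
  fun x => forall D, convex D -> subset S D -> D x.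

Definition subspace {n} (V : set_ n) :=
  V vzero /\ (forall x y, V x -> V y -> V (vadd x y)) /\
  (forall a x, V x -> V (vscale a x)).
Definition span {n} (S : set_ n) : set_ n :=
  fun x => forall V, subspace V -> subset S V -> V x.

Definition closure {n} (S : set_ n) : set_ n :=
  fun x => forall eps, 0 < eps -> exists y, S y /\ forall i, Rabs (x i - y i) < eps.
Definition closed {n} (S : set_ n) := subset (closure S) S.

Definition tangent_cone {n} (x : vec n) (D : set_ n) : set_ n :=
  closure (fun d => exists eps, 0 < eps /\ D (vadd x (vscale eps d))).

Definition open_seg {n} (y z : vec n) : set_ n :=
  fun x => exists t, 0 < t < 1 /\ x = vadd (vscale t y) (vscale (1 - t) z).

Definition face {n} (F D : set_ n) :=
  closed F /\ convex F /\ subset F D /\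
  forall x y z, F x -> D y -> D z -> open_seg y z x -> F y /\ F z.

Definition cone {n} (S : set_ n) : set_ n :=
  fun x => exists lam s, 0 <= lam /\ conv S s /\ x = vscale lam s.

Definition is_cone {n} (K : set_ n) :=
  forall a x, 0 <= a -> K x -> K (vscale a x).

Definition tangentially_exposed {n} (K : set_ n) :=
  forall F, face F K -> ~ set_eq F K -> forall x, F x ->
    set_eq (fun d => tangent_cone x K d /\ span F d) (tangent_cone x F).

Definition dual_cone {n} (K : set_ n) : set_ n :=
  fun y => forall x, K x -> 0 <= dot y x.
Definition orth {n} (F : set_ n) : set_ n :=
  fun y => forall x, F x -> dot y x = 0.
Definition msum {n} (A B : set_ n) : set_ n :=
  fun z => exists a b, A a /\ B b /\ z = vadd a b.

Definition facially_dual_complete {n} (K : set_ n) :=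
  forall F, face F K -> (exists x, F x) -> ~ set_eq F K ->
    closed (msum (dual_cone K) (orth F)).

Definition mk3 (a b c : R) : vec 3 :=
  fun i => match proj1_sig (Fin.to_nat i) with 0%nat => a | 1%nat => b | _ => c end.
Definition mk4 (a b c d : R) : vec 4 :=
  fun i => match proj1_sig (Fin.to_nat i) with
           0%nat => a | 1%nat => b | 2%nat => c | _ => d end.

Definition gamma1 (t : R) := mk3 0 (- sin t) (cos t - 1).
Definition gamma2 (t : R) := mk3 0 (cos t - 1) (- sin t).
Definition gamma3 (t : R) := mk3 (- sin t) (1 - cos t) 0.
Definition gamma4 (t : R) := mk3 (cos t - 1) (sin t) 0.

Definition curve (g : R -> vec 3) : set_ 3 :=
  fun p => exists t, 0 <= t <= PI / 4 /\ p = g t.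

Definition Cset : set_ 3 :=
  conv (fun p => curve gamma1 p \/ curve gamma2 p \/ curve gamma3 p \/ curve gamma4 p).
Definition Fface : set_ 3 :=
  conv (fun p => curve gamma3 p \/ curve gamma4 p).
Definition gvec : vec 3 := mk3 0 (-1) 0.

Definition lift1 (c : vec 3) : vec 4 :=
  mk4 (c Fin.F1) (c (Fin.FS Fin.F1)) (c (Fin.FS (Fin.FS Fin.F1))) 1.
Definition Kcone : set_ 4 := cone (fun p => exists c, Cset c /\ p = lift1 c).

(* Main.v *)
Require Import Defs.
From Stdlib Require Import ZArith Reals Lra Lia Psatz Classical ClassicalEpsilon FunctionalExtensionality PropExtensionality.
Open Scope R_scope.

Lemma fin3_ind (P : Fin.t 3 -> Prop) :
  P Fin.F1 -> P (Fin.FS Fin.F1) -> P (Fin.FS (Fin.FS Fin.F1)) -> forall i, P i.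
Proof.
  intros H1 H2 H3 i.
  pattern i; apply Fin.caseS'; [exact H1|]. clear i; intro i.
  pattern i; apply Fin.caseS'; [exact H2|]. clear i; intro i.
  pattern i; apply Fin.caseS'; [exact H3|]. clear i; intro i.
  apply Fin.case0; exact i.
Qed.

Lemma fin4_ind (P : Fin.t 4 -> Prop) :
  P Fin.F1 -> P (Fin.FS Fin.F1) -> P (Fin.FS (Fin.FS Fin.F1)) ->
  P (Fin.FS (Fin.FS (Fin.FS Fin.F1))) -> forall i, P i.
Proof.
  intros H1 H2 H3 H4 i.
  pattern i; apply Fin.caseS'; [exact H1|]. clear i; intro i.
  pattern i; apply Fin.caseS'; [exact H2|]. clear i; intro i.
  pattern i; apply Fin.caseS'; [exact H3|]. clear i; intro i.
  pattern i; apply Fin.caseS'; [exact H4|]. clear i; intro i.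
  apply Fin.case0; exact i.
Qed.

Lemma vec3_ext (x y : vec 3) :
  x Fin.F1 = y Fin.F1 -> x (Fin.FS Fin.F1) = y (Fin.FS Fin.F1) ->
  x (Fin.FS (Fin.FS Fin.F1)) = y (Fin.FS (Fin.FS Fin.F1)) -> x = y.
Proof. intros; apply functional_extensionality; apply fin3_ind; auto. Qed.

Lemma vec4_ext (x y : vec 4) :
  x Fin.F1 = y Fin.F1 -> x (Fin.FS Fin.F1) = y (Fin.FS Fin.F1) ->
  x (Fin.FS (Fin.FS Fin.F1)) = y (Fin.FS (Fin.FS Fin.F1)) ->
  x (Fin.FS (Fin.FS (Fin.FS Fin.F1))) = y (Fin.FS (Fin.FS (Fin.FS Fin.F1))) -> x = y.
Proof. intros; apply functional_extensionality; apply fin4_ind; auto. Qed.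

Goal forall a b c, mk3 a b c (Fin.FS (Fin.FS Fin.F1)) = c. intros. reflexivity. Qed.
Goal forall a b c d, mk4 a b c d (Fin.FS (Fin.FS Fin.F1)) = c. intros. reflexivity. Qed.
Goal forall c : vec 3, lift1 c (Fin.FS Fin.F1) = c (Fin.FS Fin.F1). intros. reflexivity. Qed.

Fixpoint fsum (m : nat) (f : nat -> R) : R :=
  match m with O => 0 | S k => fsum k f + f k end.

Lemma fsum_ext m f g : (forall i, (i < m)%nat -> f i = g i) -> fsum m f = fsum m g.
Proof.
  induction m; simpl; intros H; auto.
  rewrite IHm by (intros; apply H; lia). rewrite H by lia. auto.
Qed.

Lemma fsum_scal m a f : fsum m (fun i => a * f i) = a * fsum m f.
Proof. induction m; simpl; [ring|rewrite IHm; ring]. Qed.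

Lemma fsum_plus m f g : fsum m (fun i => f i + g i) = fsum m f + fsum m g.
Proof. induction m; simpl; [ring|rewrite IHm; ring]. Qed.

Lemma fsum_zero m : fsum m (fun _ => 0) = 0.
Proof. induction m; simpl; [ring|rewrite IHm; ring]. Qed.

Lemma fsum_nonneg m f : (forall i, (i < m)%nat -> 0 <= f i) -> 0 <= fsum m f.
Proof.
  induction m; simpl; intros H; [lra|].
  assert (0 <= fsum m f) by (apply IHm; intros; apply H; lia).
  assert (0 <= f m) by (apply H; lia). lra.
Qed.

Lemma fsum_nonneg_zero m f : (forall i, (i < m)%nat -> 0 <= f i) -> fsum m f = 0 ->
  forall i, (i < m)%nat -> f i = 0.
Proof.
  induction m; simpl; intros H Hs i Hi; [lia|].
  assert (0 <= fsum m f) by (apply fsum_nonneg; intros; apply H; lia).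
  assert (0 <= f m) by (apply H; lia).
  destruct (Nat.eq_dec i m) as [->|]; [lra|].
  apply IHm; try lia; [intros; apply H; lia| lra].
Qed.

Lemma fsum_app m1 m2 f : fsum (m1 + m2) f = fsum m1 f + fsum m2 (fun i => f (m1 + i)%nat).
Proof.
  induction m2; simpl. rewrite Nat.add_0_r; ring.
  rewrite Nat.add_succ_r; simpl; rewrite IHm2; ring.
Qed.

Definition sk (p i : nat) : nat := if Nat.ltb i p then i else S i.
Definition unsk (p i : nat) : nat := if Nat.ltb i p then i else pred i.

Lemma sk_neq p i : sk p i <> p.
Proof. unfold sk; destruct (Nat.ltb_spec i p); lia. Qed.
Lemma unsk_sk p i : unsk p (sk p i) = i.
Proof. unfold sk, unsk; destruct (Nat.ltb_spec i p); [destruct (Nat.ltb_spec i p)|destruct (Nat.ltb_spec (S i) p)]; lia. Qed.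
Lemma sk_lt p i m : (i < m)%nat -> (sk p i < S m)%nat.
Proof. unfold sk; destruct (Nat.ltb_spec i p); lia. Qed.

Lemma fsum_skip m f p : (p <= m)%nat -> fsum (S m) f = f p + fsum m (fun i => f (sk p i)).
Proof.
  induction m; intros Hp.
  - assert (p = 0%nat) by lia; subst; cbn [fsum]; lra.
  - destruct (Nat.eq_dec p (S m)) as [->|Hne].
    + change (fsum (S (S m)) f) with (fsum (S m) f + f (S m)).
      rewrite (fsum_ext (S m) (fun i => f (sk (S m) i)) f).
      ring. intros i Hi; unfold sk; destruct (Nat.ltb_spec i (S m)); [auto|lia].
    + change (fsum (S (S m)) f) with (fsum (S m) f + f (S m)).
      rewrite IHm by lia.
      change (fsum (S m) (fun i => f (sk p i))) with (fsum m (fun i => f (sk p i)) + f (sk p m)).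
      replace (sk p m) with (S m) by (unfold sk; destruct (Nat.ltb_spec m p); lia). ring.
Qed.

Lemma lin_dep : forall k m (v : nat -> nat -> R), (k < m)%nat ->
  exists mu, (exists i, (i < m)%nat /\ mu i <> 0) /\
    forall j, (j < k)%nat -> fsum m (fun i => mu i * v i j) = 0.
Proof.
  induction k; intros m v Hkm.
  - exists (fun _ => 1); split; [exists 0%nat; split; [lia|lra]|intros; lia].
  - destruct (classic (forall i, (i < m)%nat -> v i k = 0)) as [Hz|Hnz].
    + destruct (IHk m v ltac:(lia)) as [mu [Hnt Hs]].
      exists mu; split; auto. intros j Hj.
      destruct (Nat.eq_dec j k) as [->|]; [|apply Hs; lia].
      rewrite (fsum_ext m _ (fun _ => 0)); [apply fsum_zero|].
      intros i Hi; rewrite Hz by auto; ring.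
    + apply not_all_ex_not in Hnz; destruct Hnz as [p Hp].
      apply imply_to_and in Hp; destruct Hp as [Hpm Hvp].
      destruct m as [|m']; [lia|].
      set (w := fun i j => v (sk p i) j - v (sk p i) k / v p k * v p j).
      destruct (IHk m' w ltac:(lia)) as [nu [[i0 [Hi0 Hnu0]] Hs]].
      set (X := - fsum m' (fun i => nu i * v (sk p i) k) / v p k).
      exists (fun i => if Nat.eqb i p then X else nu (unsk p i)).
      split.
      * exists (sk p i0); split; [apply sk_lt; auto|].
        destruct (Nat.eqb_spec (sk p i0) p) as [e|_]; [exfalso; apply (sk_neq p i0); auto|].
        rewrite unsk_sk; auto.
      * intros j Hj.
        rewrite (fsum_skip m' _ p) by lia.
        rewrite Nat.eqb_refl.
        rewrite (fsum_ext m' _ (fun i => nu i * v (sk p i) j)).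
        2:{ intros i Hi. destruct (Nat.eqb_spec (sk p i) p) as [e|_];
            [exfalso; apply (sk_neq p i); auto|]. rewrite unsk_sk; auto. }
        destruct (Nat.eq_dec j k) as [->|Hjk].
        -- unfold X; field; auto.
        -- assert (Hw := Hs j ltac:(lia)). unfold w in Hw.
           rewrite (fsum_ext m' _ (fun i => nu i * v (sk p i) j + (- (v p j / v p k)) * (nu i * v (sk p i) k))) in Hw.
           2:{ intros; field; auto. }
           rewrite fsum_plus, fsum_scal in Hw.
           unfold X. replace (- fsum m' (fun i => nu i * v (sk p i) k) / v p k * v p j)
             with (- (v p j / v p k) * fsum m' (fun i => nu i * v (sk p i) k)) by (field; auto).
           lra.
Qed.

Lemma conv_convex {n} (S : set_ n) : convex (conv S).
Proof. intros x y t Hx Hy Ht D HD HS. apply HD; [apply Hx|apply Hy|]; auto. Qed.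
Lemma conv_incl {n} (S : set_ n) : subset S (conv S).
Proof. intros x Hx D HD HS; auto. Qed.
Lemma conv_min {n} (S D : set_ n) : convex D -> subset S D -> subset (conv S) D.
Proof. intros HD HS x Hx; apply Hx; auto. Qed.
Lemma conv_mono {n} (S T : set_ n) : subset S T -> subset (conv S) (conv T).
Proof. intros HST x Hx D HD HT. apply Hx; auto. intros y Hy; apply HT, HST, Hy. Qed.

Lemma comb_in {n} : forall m lam (p : nat -> vec n) (D : set_ n), convex D ->
  (forall i, (i < m)%nat -> 0 <= lam i /\ D (p i)) -> fsum m lam = 1 ->
  D (fun j => fsum m (fun i => lam i * p i j)).
Proof.
  induction m; intros lam p D HD Hp Hs; simpl in Hs; [lra|].
  assert (Hnn : forall i, (i < m)%nat -> 0 <= lam i) by (intros; apply Hp; lia).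
  assert (H0 : 0 <= fsum m lam) by (apply fsum_nonneg; auto).
  assert (Hlm : 0 <= lam m) by (apply Hp; lia).
  destruct (Req_dec (fsum m lam) 0) as [Hz|Hnz].
  - assert (Hz' := fsum_nonneg_zero m lam Hnn Hz).
    replace (fun j => fsum (S m) (fun i => lam i * p i j)) with (p m).
    + apply Hp; lia.
    + apply functional_extensionality; intro j; simpl.
      rewrite (fsum_ext m _ (fun _ => 0)); [rewrite fsum_zero|].
      * replace (lam m) with 1 by lra; ring.
      * intros i Hi; rewrite Hz' by auto; ring.
  - set (s := fsum m lam).
    assert (Hy : D (fun j => fsum m (fun i => (lam i / s) * p i j))).
    { apply IHm; auto.
      - intros i Hi; split; [unfold Rdiv; apply Rmult_le_pos; [auto|apply Rlt_le, Rinv_0_lt_compat; unfold s; lra]|apply Hp; lia].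
      - unfold Rdiv. rewrite (fsum_ext m _ (fun i => / s * lam i)) by (intros; ring).
        rewrite fsum_scal. unfold s; field; auto. }
    assert (Hc := HD _ _ s Hy (proj2 (Hp m (Nat.lt_succ_diag_r m))) ltac:(unfold s; lra)).
    replace (fun j => fsum (S m) (fun i => lam i * p i j)) with
      (vadd (vscale s (fun j => fsum m (fun i => lam i / s * p i j))) (vscale (1 - s) (p m))); auto.
    apply functional_extensionality; intro j; unfold vadd, vscale; simpl.
    rewrite (fsum_ext m _ (fun i => / s * (lam i * p i j))) by (intros; unfold Rdiv; ring).
    rewrite fsum_scal. replace (1 - s) with (lam m) by (unfold s; lra).
    field; auto.
Qed.

Definition gen (gs : nat -> R -> vec 3) (m0 : nat) : set_ 3 :=
  fun p => exists a t, (a < m0)%nat /\ 0 <= t <= PI/4 /\ p = gs a t.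

Definition RepN (gs : nat -> R -> vec 3) (m0 m : nat) (x : vec 3) :=
  exists lam c t, (forall i, (i < m)%nat -> 0 <= lam i /\ (c i < m0)%nat /\ 0 <= t i <= PI/4) /\
    fsum m lam = 1 /\ forall j, x j = fsum m (fun i => lam i * gs (c i) (t i) j).

Lemma RepN_conv gs m0 m x : RepN gs m0 m x -> conv (gen gs m0) x.
Proof.
  intros [lam [c [t [Hi [Hs Hx]]]]] D HD HS.
  replace x with (fun j => fsum m (fun i => lam i * gs (c i) (t i) j)).
  - apply comb_in; auto. intros i Him; destruct (Hi i Him) as [? [? ?]]; split; auto.
    apply HS; exists (c i), (t i); auto.
  - apply functional_extensionality; intro j; rewrite Hx; auto.
Qed.

Lemma conv_Rep gs m0 x : conv (gen gs m0) x -> exists m, RepN gs m0 m x.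
Proof.
  intro Hx; apply Hx.
  - intros y z s [m1 [l1 [c1 [t1 [H1 [S1 X1]]]]]] [m2 [l2 [c2 [t2 [H2 [S2 X2]]]]]] Hs.
    exists (m1 + m2)%nat.
    exists (fun i => if Nat.ltb i m1 then s * l1 i else (1 - s) * l2 (i - m1)%nat).
    exists (fun i => if Nat.ltb i m1 then c1 i else c2 (i - m1)%nat).
    exists (fun i => if Nat.ltb i m1 then t1 i else t2 (i - m1)%nat).
    split; [|split].
    + intros i Hi; destruct (Nat.ltb_spec i m1).
      * destruct (H1 i) as [? [? ?]]; auto; repeat split; auto; nra.
      * destruct (H2 (i - m1)%nat) as [? [? ?]]; [lia|]; repeat split; auto; nra.
    + rewrite fsum_app.
      rewrite (fsum_ext m1 _ (fun i => s * l1 i)) by (intros i Hi; destruct (Nat.ltb_spec i m1); [auto|lia]).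
      rewrite (fsum_ext m2 _ (fun i => (1 - s) * l2 i)).
      2:{ intros i Hi; cbv beta; destruct (Nat.ltb_spec (m1 + i) m1); [lia|]. f_equal; f_equal; lia. }
      rewrite !fsum_scal, S1, S2; ring.
    + intro j; unfold vadd, vscale; rewrite X1, X2, fsum_app, <- !fsum_scal.
      f_equal; apply fsum_ext; intros i Hi; cbv beta.
      * destruct (Nat.ltb_spec i m1); [ring|lia].
      * destruct (Nat.ltb_spec (m1 + i) m1); [lia|].
        replace (m1 + i - m1)%nat with i by lia; ring.
  - intros p [a [t [Ha [Ht ->]]]].
    exists 1%nat, (fun _ => 1), (fun _ => a), (fun _ => t).
    split; [intros; repeat split; auto; lra|split; [simpl; ring|intro j; simpl; ring]].
Qed.

Lemma argmin : forall m (mu lam : nat -> R), (exists i, (i < m)%nat /\ 0 < mu i) ->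
  exists q, (q < m)%nat /\ 0 < mu q /\
    forall i, (i < m)%nat -> 0 < mu i -> lam q / mu q <= lam i / mu i.
Proof.
  induction m; intros mu lam [i0 [Hi0 Hm0]]; [lia|].
  destruct (classic (exists i, (i < m)%nat /\ 0 < mu i)) as [Hex|Hnex].
  - destruct (IHm mu lam Hex) as [q [Hq [Hmq Hmin]]].
    destruct (Rlt_dec 0 (mu m)) as [Hpm|Hpm].
    + destruct (Rlt_dec (lam m / mu m) (lam q / mu q)) as [Hlt|Hge].
      * exists m; split; [lia|split; auto]. intros i Hi Hmi.
        destruct (Nat.eq_dec i m) as [->|]; [lra|]. specialize (Hmin i ltac:(lia) Hmi); lra.
      * exists q; split; [lia|split; auto]. intros i Hi Hmi.
        destruct (Nat.eq_dec i m) as [->|]; [lra|]. apply Hmin; auto; lia.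
    + exists q; split; [lia|split; auto]. intros i Hi Hmi.
      destruct (Nat.eq_dec i m) as [->|]; [lra|]. apply Hmin; auto; lia.
  - assert (i0 = m).
    { destruct (Nat.eq_dec i0 m); auto. exfalso; apply Hnex; exists i0; split; auto; lia. }
    subst. exists m; split; [lia|split; auto]. intros i Hi Hmi.
    destruct (Nat.eq_dec i m) as [->|]; [lra|]. exfalso; apply Hnex; exists i; split; auto; lia.
Qed.

Lemma cara_step gs m0 m x : RepN gs m0 (S m) x -> (4 <= m)%nat -> RepN gs m0 m x.
Proof.
  intros [lam [c [t [Hi [Hs Hx]]]]] Hm.
  set (P := fun i => gs (c i) (t i)).
  set (v := fun i j => match j with 0%nat => P i Fin.F1 | 1%nat => P i (Fin.FS Fin.F1)
                       | 2%nat => P i (Fin.FS (Fin.FS Fin.F1)) | _ => 1 end).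
  destruct (lin_dep 4 (S m) v ltac:(lia)) as [mu [[i0 [Hi0 Hmu0]] Hdep]].
  assert (Hs1 : fsum (S m) mu = 0).
  { rewrite <- (Hdep 3%nat ltac:(lia)). apply fsum_ext; intros; unfold v; ring. }
  assert (Hc : forall j, fsum (S m) (fun i => mu i * P i j) = 0).
  { apply fin3_ind.
    - rewrite <- (Hdep 0%nat ltac:(lia)); apply fsum_ext; intros; reflexivity.
    - rewrite <- (Hdep 1%nat ltac:(lia)); apply fsum_ext; intros; reflexivity.
    - rewrite <- (Hdep 2%nat ltac:(lia)); apply fsum_ext; intros; reflexivity. }
  assert (Hpos : exists i, (i < S m)%nat /\ 0 < mu i).
  { apply NNPP; intro Hn.
    assert (Hle : forall i, (i < S m)%nat -> 0 <= - mu i).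
    { intros i Hi'. destruct (Rlt_dec 0 (mu i)); [exfalso; apply Hn; exists i; auto|lra]. }
    assert (Hz : fsum (S m) (fun i => - mu i) = 0).
    { rewrite (fsum_ext _ _ (fun i => (-1) * mu i)) by (intros; ring).
      rewrite fsum_scal, Hs1; ring. }
    assert (H0 := fsum_nonneg_zero _ _ Hle Hz i0 Hi0). lra. }
  destruct (argmin (S m) mu lam Hpos) as [q [Hq [Hmq Hmin]]].
  set (tau := lam q / mu q).
  assert (Htau : 0 <= tau).
  { unfold tau, Rdiv; apply Rmult_le_pos; [apply Hi; auto|apply Rlt_le, Rinv_0_lt_compat; auto]. }
  set (lam' := fun i => lam i - tau * mu i).
  assert (Hl'q : lam' q = 0) by (unfold lam', tau; field; lra).
  assert (Hl'nn : forall i, (i < S m)%nat -> 0 <= lam' i).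
  { intros i Hi'. unfold lam'. destruct (Hi i Hi') as [Hli _].
    destruct (Rlt_dec 0 (mu i)) as [Hp|Hp].
    - specialize (Hmin i Hi' Hp). fold tau in Hmin.
      assert (tau * mu i <= lam i).
      { apply (Rmult_le_compat_r (mu i)) in Hmin; [|lra].
        unfold Rdiv in Hmin. rewrite Rmult_assoc, Rinv_l in Hmin by lra. lra. }
      lra.
    - nra. }
  exists (fun i => lam' (sk q i)), (fun i => c (sk q i)), (fun i => t (sk q i)).
  split; [|split].
  - intros i Hi'. assert (Hsk := sk_lt q i m Hi').
    destruct (Hi _ Hsk) as [_ [? ?]]. split; auto.
  - assert (E : fsum (S m) lam' = 1).
    { unfold lam'. rewrite (fsum_ext _ _ (fun i => lam i + (- tau) * mu i)) by (intros; ring).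
      rewrite fsum_plus, fsum_scal, Hs, Hs1; ring. }
    rewrite (fsum_skip m lam' q) in E by lia. lra.
  - intro j. assert (E : fsum (S m) (fun i => lam' i * P i j) = x j).
    { unfold lam'. rewrite (fsum_ext _ _ (fun i => lam i * P i j + (- tau) * (mu i * P i j))) by (intros; ring).
      rewrite fsum_plus, fsum_scal, Hc, Hx; unfold P; ring. }
    rewrite (fsum_skip m _ q) in E by lia. rewrite Hl'q in E. unfold P in E. lra.
Qed.

Lemma fsum_pad n m f : (m <= n)%nat -> fsum n (fun i => if Nat.ltb i m then f i else 0) = fsum m f.
Proof.
  induction n; intros H.
  - assert (m = 0%nat) by lia; subst; reflexivity.
  - destruct (Nat.eq_dec m (S n)) as [->|Hne].
    + apply fsum_ext; intros i Hi; destruct (Nat.ltb_spec i (S n)); [auto|lia].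
    + simpl. rewrite IHn by lia. destruct (Nat.ltb_spec n m); [lia|ring].
Qed.

Lemma RepN_4 gs m0 : forall m x, RepN gs m0 m x -> RepN gs m0 4 x.
Proof.
  induction m; intros x HR.
  - destruct HR as [lam [c [t [_ [Hs _]]]]]; simpl in Hs; lra.
  - destruct (Compare_dec.le_lt_dec (S m) 4) as [Hle|Hlt].
    + destruct HR as [lam [c [t [Hi [Hs Hx]]]]].
      exists (fun i => if Nat.ltb i (S m) then lam i else 0),
        (fun i => if Nat.ltb i (S m) then c i else c 0%nat),
        (fun i => if Nat.ltb i (S m) then t i else t 0%nat).
      split; [|split].
      * intros i Hi4. destruct (Nat.ltb_spec i (S m)); [apply Hi; auto|].
        destruct (Hi 0%nat ltac:(lia)) as [? [? ?]]; repeat split; auto; lra.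
      * rewrite fsum_pad; auto.
      * intro j; rewrite Hx, <- (fsum_pad 4 (S m)) by auto.
        apply fsum_ext; intros i Hi5; destruct (Nat.ltb_spec i (S m)); ring.
    + apply IHm, cara_step; auto; lia.
Qed.

Lemma conv_Rep4 gs m0 x : conv (gen gs m0) x -> RepN gs m0 4 x.
Proof. intro H; destruct (conv_Rep gs m0 x H) as [m Hm]; eapply RepN_4; eauto. Qed.

Definition incr (phi : nat -> nat) := forall n, (phi n < phi (S n))%nat.

Lemma incr_ge phi : incr phi -> forall n, (n <= phi n)%nat.
Proof. intros H n; induction n; [lia|]. specialize (H n); lia. Qed.

Lemma incr_mono phi : incr phi -> forall n m, (n <= m)%nat -> (phi n <= phi m)%nat.
Proof. intros H n m Hnm; induction Hnm; [lia|]. specialize (H m); lia. Qed.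

Lemma incr_comp phi psi : incr phi -> incr psi -> incr (fun n => phi (psi n)).
Proof.
  intros H1 H2 n. specialize (H2 n).
  assert (Hm := incr_mono phi H1 (S (psi n)) (psi (S n)) ltac:(lia)).
  specialize (H1 (psi n)). lia.
Qed.

Lemma cv_sub (w : nat -> R) l phi : incr phi -> Un_cv w l -> Un_cv (fun n => w (phi n)) l.
Proof.
  intros Hp Hc eps He. destruct (Hc eps He) as [N HN]. exists N; intros n Hn.
  apply HN. assert (H := incr_ge phi Hp n). lia.
Qed.

Lemma cv_le (w : nat -> R) l b : Un_cv w l -> (forall n, w n <= b) -> l <= b.
Proof.
  intros Hc Hb. destruct (Rle_dec l b) as [|Hn]; auto.
  destruct (Hc (l - b) ltac:(lra)) as [N HN]. specialize (HN N (le_n N)). specialize (Hb N).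
  unfold Rdist in HN. apply Rabs_def2 in HN. lra.
Qed.

Lemma cv_ge (w : nat -> R) l a : Un_cv w l -> (forall n, a <= w n) -> a <= l.
Proof.
  intros Hc Hb. destruct (Rle_dec a l) as [|Hn]; auto.
  destruct (Hc (a - l) ltac:(lra)) as [N HN]. specialize (HN N (le_n N)). specialize (Hb N).
  unfold Rdist in HN. apply Rabs_def2 in HN. lra.
Qed.

Lemma INR_S_pos n : 0 < / INR (S n).
Proof. apply Rinv_0_lt_compat, lt_0_INR; lia. Qed.

Lemma cv_rate (w : nat -> R) l : (forall n, Rabs (w n - l) < / INR (S n)) -> Un_cv w l.
Proof.
  intros H eps He.
  destruct (archimed (/ eps)) as [Hup _].
  assert (Hz : (0 <= up (/ eps))%Z).
  { apply le_IZR. assert (0 < / eps) by (apply Rinv_0_lt_compat; auto). simpl; lra. }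
  exists (Z.to_nat (up (/ eps))). intros n Hn. unfold Rdist.
  eapply Rlt_le_trans; [apply H|].
  assert (HINR : / eps < INR (S n)).
  { rewrite S_INR. apply le_INR in Hn. rewrite INR_IZR_INZ, Z2Nat.id in Hn by auto. lra. }
  assert (0 < / eps) by (apply Rinv_0_lt_compat; auto).
  rewrite <- (Rinv_inv eps). apply Rlt_le, Rinv_lt_contravar; auto. nra.
Qed.

Lemma extract_R (u : nat -> R) a b : (forall n, a <= u n <= b) ->
  exists l phi, incr phi /\ a <= l <= b /\ Un_cv (fun n => u (phi n)) l.
Proof.
  intros Hb.
  destruct (Bolzano_Weierstrass u (fun c => a <= c <= b) (compact_P3 a b) Hb) as [l Hl].
  assert (H : forall N k, exists p, (N <= p)%nat /\ Rabs (u p - l) < / INR (S k)).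
  { intros N k. destruct (Hl (fun y => Rabs (y - l) < / INR (S k)) N) as [p [Hp Hv]].
    - exists (mkposreal _ (INR_S_pos k)). intros y Hy; unfold disc in Hy; simpl in Hy; auto.
    - exists p; auto. }
  set (pick := fun N k => proj1_sig (constructive_indefinite_description _ (H N k))).
  assert (Hpick : forall N k, (N <= pick N k)%nat /\ Rabs (u (pick N k) - l) < / INR (S k)).
  { intros; unfold pick; destruct (constructive_indefinite_description _ _); auto. }
  set (phi := fix phi n := match n with O => pick O O | S m => pick (S (phi m)) (S m) end).
  exists l, phi. split; [|split].
  - intro n. simpl. destruct (Hpick (S (phi n)) (S n)); lia.
  - split; [apply (cv_ge (fun n => u (phi n)))|apply (cv_le (fun n => u (phi n)))];
      try (intro n; apply Hb); apply cv_rate; intro n; destruct n; simpl; apply Hpick.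
  - apply cv_rate; intro n; destruct n; simpl; apply Hpick.
Qed.

Lemma extract_vec : forall k (u : nat -> nat -> R) a b,
  (forall n i, (i < k)%nat -> a <= u n i <= b) ->
  exists l phi, incr phi /\ forall i, (i < k)%nat -> Un_cv (fun n => u (phi n) i) (l i).
Proof.
  induction k; intros u a b Hb.
  - exists (fun _ => 0), (fun n => n); split; [intro; lia|intros; lia].
  - destruct (IHk u a b ltac:(intros; apply Hb; lia)) as [l1 [phi1 [Hp1 Hc1]]].
    destruct (extract_R (fun n => u (phi1 n) k) a b ltac:(intros; apply Hb; lia)) as [lk [phi2 [Hp2 [_ Hc2]]]].
    exists (fun i => if Nat.eqb i k then lk else l1 i), (fun n => phi1 (phi2 n)).
    split; [apply incr_comp; auto|].
    intros i Hi. destruct (Nat.eqb_spec i k) as [->|Hne]; auto.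
    apply (cv_sub (fun n => u (phi1 n) i)); auto. apply Hc1; lia.
Qed.

Lemma cv_fsum : forall m (f : nat -> nat -> R) g,
  (forall i, (i < m)%nat -> Un_cv (fun n => f n i) (g i)) ->
  Un_cv (fun n => fsum m (f n)) (fsum m g).
Proof.
  induction m; intros f g H; simpl.
  - intros eps He; exists 0%nat; intros; unfold Rdist; rewrite Rminus_diag, Rabs_R0; auto.
  - apply CV_plus; [apply IHm; intros; apply H; lia|apply H; lia].
Qed.

Lemma cv_event (w v : nat -> R) l N : (forall n, (N <= n)%nat -> w n = v n) -> Un_cv v l -> Un_cv w l.
Proof.
  intros He Hc eps Heps. destruct (Hc eps Heps) as [M HM]. exists (N + M)%nat; intros n Hn.
  rewrite He by lia; apply HM; lia.
Qed.

Lemma cv_const c : Un_cv (fun _ => c) c.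
Proof. intros eps He; exists 0%nat; intros; unfold Rdist; rewrite Rminus_diag, Rabs_R0; auto. Qed.

Lemma INR_close a b : Rabs (INR a - INR b) < 1 -> a = b.
Proof.
  intro H. apply Rabs_def2 in H. destruct (Nat.lt_trichotomy a b) as [Hl|[Hl|Hl]]; auto;
  apply (le_INR (S _)) in Hl; rewrite S_INR in Hl; lra.
Qed.

Lemma cv_nat_event (c : nat -> nat) l : Un_cv (fun n => INR (c n)) l ->
  exists A N, forall n, (N <= n)%nat -> c n = A.
Proof.
  intro H. destruct (H (1/2) ltac:(lra)) as [N HN]. exists (c N), N. intros n Hn.
  apply INR_close. assert (H1 := HN n Hn). assert (H2 := HN N (le_n N)). unfold Rdist in *.
  apply Rabs_def2 in H1; apply Rabs_def2 in H2. apply Rabs_def1; lra.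
Qed.

Lemma fsum_le_term m f i : (forall k, (k < m)%nat -> 0 <= f k) -> (i < m)%nat -> f i <= fsum m f.
Proof.
  induction m; intros H Hi; [lia|]. simpl.
  assert (0 <= fsum m f) by (apply fsum_nonneg; intros; apply H; lia).
  destruct (Nat.eq_dec i m) as [->|]; [lra|].
  assert (f i <= fsum m f) by (apply IHm; [intros; apply H; lia|lia]).
  assert (0 <= f m) by (apply H; lia). lra.
Qed.

Definition Good gs m0 (x : vec 3) n (lam : nat -> R) (c : nat -> nat) (t : nat -> R) :=
  (forall i, (i < 4)%nat -> 0 <= lam i /\ (c i < m0)%nat /\ 0 <= t i <= PI/4) /\
  fsum 4 lam = 1 /\
  forall j, Rabs (x j - fsum 4 (fun i => lam i * gs (c i) (t i) j)) < / INR (S n).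

Lemma conv_gen_closed gs m0 :
  (forall a (j : Fin.t 3) T, continuity_pt (fun t => gs a t j) T) -> closed (conv (gen gs m0)).
Proof.
  intros Hcont x Hx.
  assert (H2 : forall n, exists lct : (nat -> R) * (nat -> nat) * (nat -> R),
             Good gs m0 x n (fst (fst lct)) (snd (fst lct)) (snd lct)).
  { intro n. destruct (Hx (/ INR (S n)) (INR_S_pos n)) as [y [Hy Hxy]].
    destruct (conv_Rep4 gs m0 y Hy) as [lam [c [t [Hi [Hs Hyr]]]]].
    exists (lam, c, t); simpl. split; [auto|split; [auto|]].
    intro j; rewrite <- Hyr; auto. }
  set (F := fun n => proj1_sig (constructive_indefinite_description _ (H2 n))).
  set (lam := fun n => fst (fst (F n))). set (c := fun n => snd (fst (F n))). set (t := fun n => snd (F n)).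
  assert (HG : forall n, Good gs m0 x n (lam n) (c n) (t n)).
  { intro n; unfold lam, c, t, F; destruct (constructive_indefinite_description _ _); auto. }
  set (b := 1 + INR m0).
  set (u := fun n i => if Nat.ltb i 4 then lam n i else if Nat.ltb i 8 then INR (c n (i - 4)%nat) else t n (i - 8)%nat).
  assert (Hb : forall n i, (i < 12)%nat -> 0 <= u n i <= b).
  { intros n i Hi. destruct (HG n) as [Hc [Hs _]]. unfold u, b.
    assert (0 <= INR m0) by apply pos_INR.
    destruct (Nat.ltb_spec i 4).
    - destruct (Hc i) as [? _]; auto. split; auto.
      assert (lam n i <= fsum 4 (lam n)) by (apply fsum_le_term; auto; intros; apply Hc; auto). lra.
    - destruct (Nat.ltb_spec i 8).
      + destruct (Hc (i - 4)%nat) as [_ [Hcm _]]; [lia|]. split; [apply pos_INR|].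
        apply lt_INR in Hcm. lra.
      + destruct (Hc (i - 8)%nat) as [_ [_ Ht]]; [lia|]. assert (H4 := PI_4). lra. }
  destruct (extract_vec 12 u 0 b Hb) as [l [phi [Hphi Hcv]]].
  assert (Hlam : forall i, (i < 4)%nat -> Un_cv (fun n => lam (phi n) i) (l i)).
  { intros i Hi. assert (E := Hcv i ltac:(lia)). unfold u in E.
    destruct (Nat.ltb_spec i 4); [auto|lia]. }
  assert (Hcc : forall i, (i < 4)%nat -> Un_cv (fun n => INR (c (phi n) i)) (l (4 + i)%nat)).
  { intros i Hi. assert (E := Hcv (4 + i)%nat ltac:(lia)). unfold u in E.
    destruct (Nat.ltb_spec (4 + i) 4); [lia|]. destruct (Nat.ltb_spec (4 + i) 8); [|lia].
    replace (4 + i - 4)%nat with i in E by lia; auto. }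
  assert (Htt : forall i, (i < 4)%nat -> Un_cv (fun n => t (phi n) i) (l (8 + i)%nat)).
  { intros i Hi. assert (E := Hcv (8 + i)%nat ltac:(lia)). unfold u in E.
    destruct (Nat.ltb_spec (8 + i) 4); [lia|]. destruct (Nat.ltb_spec (8 + i) 8); [lia|].
    replace (8 + i - 8)%nat with i in E by lia; auto. }
  assert (HAN : forall i, exists AN : nat * nat, (i < 4)%nat ->
             forall n, (snd AN <= n)%nat -> c (phi n) i = fst AN).
  { intro i. destruct (Nat.lt_ge_cases i 4) as [Hi|Hi].
    - destruct (cv_nat_event (fun n => c (phi n) i) _ (Hcc i Hi)) as [A [N HN]].
      exists (A, N); simpl; auto.
    - exists (0%nat, 0%nat); intros; lia. }
  set (AN := fun i => proj1_sig (constructive_indefinite_description _ (HAN i))).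
  assert (HAN' : forall i, (i < 4)%nat -> forall n, (snd (AN i) <= n)%nat -> c (phi n) i = fst (AN i)).
  { intro i; unfold AN; destruct (constructive_indefinite_description _ _); auto. }
  set (A := fun i => fst (AN i)).
  set (Nm := (snd (AN 0%nat) + snd (AN 1%nat) + snd (AN 2%nat) + snd (AN 3%nat))%nat).
  assert (HA : forall i, (i < 4)%nat -> forall n, (Nm <= n)%nat -> c (phi n) i = A i).
  { intros i Hi n Hn. apply HAN'; auto. unfold Nm in Hn.
    destruct i as [|[|[|[|]]]]; lia. }
  set (Lam := fun i => l i). set (T := fun i => l (8 + i)%nat).
  assert (Hterm : forall j, forall i, (i < 4)%nat ->
    Un_cv (fun n => lam (phi n) i * gs (c (phi n) i) (t (phi n) i) j) (Lam i * gs (A i) (T i) j)).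
  { intros j i Hi. apply CV_mult; [apply Hlam; auto|].
    apply (cv_event _ (fun n => gs (A i) (t (phi n) i) j) _ Nm).
    - intros n Hn; rewrite HA; auto.
    - apply (continuity_seq (fun s => gs (A i) s j)); [apply Hcont|apply Htt; auto]. }
  assert (Hxj : forall j, x j = fsum 4 (fun i => Lam i * gs (A i) (T i) j)).
  { intro j. apply (UL_sequence (fun n => fsum 4 (fun i => lam (phi n) i * gs (c (phi n) i) (t (phi n) i) j))).
    - apply cv_rate. intro n. destruct (HG (phi n)) as [_ [_ Hd]]. specialize (Hd j).
      rewrite Rabs_minus_sym. eapply Rlt_le_trans; [apply Hd|].
      assert (Hge := incr_ge phi Hphi n).
      apply Rinv_le_contravar; [apply lt_0_INR; lia|apply le_INR; lia].
    - apply (cv_fsum 4 (fun n i => lam (phi n) i * gs (c (phi n) i) (t (phi n) i) j)).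
      intros; apply Hterm; auto. }
  apply (RepN_conv gs m0 4). exists Lam, A, T. split; [|split; auto].
  - intros i Hi. split; [|split].
    + apply (cv_ge (fun n => lam (phi n) i)); [apply Hlam; auto|]. intro n; apply (HG (phi n)); auto.
    + rewrite <- (HA i Hi Nm (le_n _)). apply (HG (phi Nm)); auto.
    + split; [apply (cv_ge (fun n => t (phi n) i))|apply (cv_le (fun n => t (phi n) i))];
        try (apply Htt; auto); intro n; apply (HG (phi n)); auto.
  - apply (UL_sequence (fun n => fsum 4 (lam (phi n)))).
    + apply (cv_fsum 4 (fun n => lam (phi n))). intros; apply Hlam; auto.
    + apply (cv_event _ (fun _ => 1) _ 0%nat); [intros n _; apply (HG (phi n))|apply cv_const].
Qed.

Definition gsC (a : nat) (t : R) : vec 3 :=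
  match a with 0%nat => gamma1 t | 1%nat => gamma2 t | 2%nat => gamma3 t | _ => gamma4 t end.
Definition gsF (a : nat) (t : R) : vec 3 :=
  match a with 0%nat => gamma3 t | _ => gamma4 t end.

Lemma cont_curve (g : R -> vec 3) :
  (forall T, continuity_pt (fun t => g t Fin.F1) T) ->
  (forall T, continuity_pt (fun t => g t (Fin.FS Fin.F1)) T) ->
  (forall T, continuity_pt (fun t => g t (Fin.FS (Fin.FS Fin.F1))) T) ->
  forall j T, continuity_pt (fun t => g t j) T.
Proof. intros H1 H2 H3 j; pattern j; apply fin3_ind; auto. Qed.

Ltac contsolve := intro; cbn; reg.

Lemma cont_g1 : forall j T, continuity_pt (fun t => gamma1 t j) T.
Proof. apply cont_curve; contsolve. Qed.
Lemma cont_g2 : forall j T, continuity_pt (fun t => gamma2 t j) T.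
Proof. apply cont_curve; contsolve. Qed.
Lemma cont_g3 : forall j T, continuity_pt (fun t => gamma3 t j) T.
Proof. apply cont_curve; contsolve. Qed.
Lemma cont_g4 : forall j T, continuity_pt (fun t => gamma4 t j) T.
Proof. apply cont_curve; contsolve. Qed.

Lemma Cset_eq : Cset = conv (gen gsC 4).
Proof.
  unfold Cset; f_equal; apply functional_extensionality; intro p; apply propositional_extensionality; split.
  - intros [[t [Ht ->]]|[[t [Ht ->]]|[[t [Ht ->]]|[t [Ht ->]]]]].
    + exists 0%nat, t; repeat split; auto; lra || lia.
    + exists 1%nat, t; repeat split; auto; lra || lia.
    + exists 2%nat, t; repeat split; auto; lra || lia.
    + exists 3%nat, t; repeat split; auto; lra || lia.
  - intros [a [t [Ha [Ht ->]]]]. destruct a as [|[|[|[|a]]]]; simpl.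
    + left; exists t; auto.
    + right; left; exists t; auto.
    + right; right; left; exists t; auto.
    + right; right; right; exists t; auto.
    + lia.
Qed.

Lemma Fface_eq : Fface = conv (gen gsF 2).
Proof.
  unfold Fface; f_equal; apply functional_extensionality; intro p; apply propositional_extensionality; split.
  - intros [[t [Ht ->]]|[t [Ht ->]]].
    + exists 0%nat, t; repeat split; auto; lra || lia.
    + exists 1%nat, t; repeat split; auto; lra || lia.
  - intros [a [t [Ha [Ht ->]]]]. destruct a as [|[|a]]; simpl.
    + left; exists t; auto.
    + right; exists t; auto.
    + lia.
Qed.

Lemma Cset_closed : closed Cset.
Proof.
  rewrite Cset_eq; apply conv_gen_closed. intros a j T.
  destruct a as [|[|[|a]]]; simpl; [apply cont_g1|apply cont_g2|apply cont_g3|apply cont_g4].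
Qed.

Lemma Fface_closed : closed Fface.
Proof.
  rewrite Fface_eq; apply conv_gen_closed. intros a j T.
  destruct a as [|a]; simpl; [apply cont_g3|apply cont_g4].
Qed.

Lemma trig_facts t : 0 <= t <= PI/4 ->
  0 <= sin t /\ 0 <= cos t /\ sin t * sin t + cos t * cos t = 1 /\ cos t <= 1 /\ sin t <= t /\ sin t <= 1.
Proof.
  intro Ht. assert (HP := PI_RGT_0).
  assert (Hs : 0 <= sin t) by (apply sin_ge_0; lra).
  assert (Hc : 0 <= cos t) by (apply cos_ge_0; lra).
  assert (H2 := sin2_cos2 t). unfold Rsqr in H2.
  assert (Hst : sin t <= t).
  { destruct (Req_dec t 0) as [->|Hn]; [rewrite sin_0; lra|]. left; apply sin_lt_x; lra. }
  repeat split; auto; nra.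
Qed.

Lemma trig_pos t : 0 < t <= PI/4 -> 0 < sin t /\ cos t < 1.
Proof.
  intro Ht. assert (HP := PI_RGT_0).
  assert (Hs : 0 < sin t) by (apply sin_gt_0; lra).
  destruct (trig_facts t ltac:(lra)) as [_ [Hc [H2 _]]]. split; auto; nra.
Qed.

Definition lin3 (a b c d : R) (p : vec 3) := a * p Fin.F1 + b * p (Fin.FS Fin.F1) + c * p (Fin.FS (Fin.FS Fin.F1)) + d.

Lemma half_convex a b c d : convex (fun p => 0 <= lin3 a b c d p).
Proof.
  intros x y t Hx Hy Ht. unfold lin3, vadd, vscale in *.
  replace (a * (t * x Fin.F1 + (1 - t) * y Fin.F1) + b * (t * x (Fin.FS Fin.F1) + (1 - t) * y (Fin.FS Fin.F1)) +
     c * (t * x (Fin.FS (Fin.FS Fin.F1)) + (1 - t) * y (Fin.FS (Fin.FS Fin.F1))) + d)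
   with (t * (a * x Fin.F1 + b * x (Fin.FS Fin.F1) + c * x (Fin.FS (Fin.FS Fin.F1)) + d) +
         (1 - t) * (a * y Fin.F1 + b * y (Fin.FS Fin.F1) + c * y (Fin.FS (Fin.FS Fin.F1)) + d)) by ring.
  apply Rplus_le_le_0_compat; apply Rmult_le_pos; lra.
Qed.

Lemma Cset_half a b c d :
  (forall t, 0 <= t <= PI/4 -> 0 <= lin3 a b c d (gamma1 t) /\ 0 <= lin3 a b c d (gamma2 t) /\
                              0 <= lin3 a b c d (gamma3 t) /\ 0 <= lin3 a b c d (gamma4 t)) ->
  forall p, Cset p -> 0 <= lin3 a b c d p.
Proof.
  intros H p Hp. apply Hp; [apply half_convex|].
  intros q [[t [Ht ->]]|[[t [Ht ->]]|[[t [Ht ->]]|[t [Ht ->]]]]]; apply H; auto.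
Qed.

Lemma Fface_half a b c d :
  (forall t, 0 <= t <= PI/4 -> 0 <= lin3 a b c d (gamma3 t) /\ 0 <= lin3 a b c d (gamma4 t)) ->
  forall p, Fface p -> 0 <= lin3 a b c d p.
Proof.
  intros H p Hp. apply Hp; [apply half_convex|].
  intros q [[t [Ht ->]]|[t [Ht ->]]]; apply H; auto.
Qed.

Lemma Fface_sub : subset Fface Cset.
Proof. apply conv_mono. intros p Hp; right; right; exact Hp. Qed.

Ltac trigs t Ht := destruct (trig_facts t Ht) as [? [? [? [? [? ?]]]]].

Lemma C_z_le p : Cset p -> p (Fin.FS (Fin.FS Fin.F1)) <= 0.
Proof.
  intro Hp. assert (H := Cset_half 0 0 (-1) 0); unfold lin3 in H.
  assert (0 <= 0 * p Fin.F1 + 0 * p (Fin.FS Fin.F1) + -1 * p (Fin.FS (Fin.FS Fin.F1)) + 0); [|lra].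
  apply H; auto. intros t Ht; trigs t Ht; cbn; repeat split; lra.
Qed.

Lemma F_z0 p : Fface p -> p (Fin.FS (Fin.FS Fin.F1)) = 0.
Proof.
  intro Hp. assert (H1 := Fface_half 0 0 (-1) 0); assert (H2 := Fface_half 0 0 1 0); unfold lin3 in *.
  assert (0 <= 0 * p Fin.F1 + 0 * p (Fin.FS Fin.F1) + -1 * p (Fin.FS (Fin.FS Fin.F1)) + 0)
    by (apply H1; auto; intros t Ht; cbn; lra).
  assert (0 <= 0 * p Fin.F1 + 0 * p (Fin.FS Fin.F1) + 1 * p (Fin.FS (Fin.FS Fin.F1)) + 0)
    by (apply H2; auto; intros t Ht; cbn; lra).
  lra.
Qed.

Lemma F_y p : Fface p -> 0 <= p (Fin.FS Fin.F1).
Proof.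
  intro Hp. assert (H := Fface_half 0 1 0 0); unfold lin3 in H.
  assert (0 <= 0 * p Fin.F1 + 1 * p (Fin.FS Fin.F1) + 0 * p (Fin.FS (Fin.FS Fin.F1)) + 0); [|lra].
  apply H; auto. intros t Ht; trigs t Ht; cbn; split; lra.
Qed.

Lemma C_bound p : Cset p -> forall j, -1 <= p j <= 1.
Proof.
  intro Hp.
  assert (B : forall a b c, (forall t, 0 <= t <= PI/4 -> 0 <= lin3 a b c 1 (gamma1 t) /\ 0 <= lin3 a b c 1 (gamma2 t) /\ 0 <= lin3 a b c 1 (gamma3 t) /\ 0 <= lin3 a b c 1 (gamma4 t)) ->
     0 <= lin3 a b c 1 p) by (intros; apply Cset_half; auto).
  unfold lin3 in B.
  apply fin3_ind; split.
  - assert (H := B 1 0 0 ltac:(intros t Ht; trigs t Ht; unfold lin3; cbn; repeat split; lra)); lra.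
  - assert (H := B (-1) 0 0 ltac:(intros t Ht; trigs t Ht; unfold lin3; cbn; repeat split; lra)); lra.
  - assert (H := B 0 1 0 ltac:(intros t Ht; trigs t Ht; unfold lin3; cbn; repeat split; lra)); lra.
  - assert (H := B 0 (-1) 0 ltac:(intros t Ht; trigs t Ht; unfold lin3; cbn; repeat split; lra)); lra.
  - assert (H := B 0 0 1 ltac:(intros t Ht; trigs t Ht; unfold lin3; cbn; repeat split; lra)); lra.
  - assert (H := B 0 0 (-1) ltac:(intros t Ht; trigs t Ht; unfold lin3; cbn; repeat split; lra)); lra.
Qed.

Lemma g3_0 : gamma3 0 = vzero.
Proof. apply vec3_ext; unfold vzero; cbn; rewrite ?sin_0, ?cos_0; ring. Qed.
Lemma g1_0 : gamma1 0 = vzero.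
Proof. apply vec3_ext; unfold vzero; cbn; rewrite ?sin_0, ?cos_0; ring. Qed.
Lemma g2_0 : gamma2 0 = vzero.
Proof. apply vec3_ext; unfold vzero; cbn; rewrite ?sin_0, ?cos_0; ring. Qed.

Lemma PI4_bounds : 0 < PI/4 <= PI/4.
Proof. assert (H := PI_RGT_0); lra. Qed.

Lemma F_zero : Fface vzero.
Proof. rewrite <- g3_0. apply conv_incl; left; exists 0; split; auto. assert (H := PI_RGT_0); lra. Qed.
Lemma C_zero : Cset vzero.
Proof. apply Fface_sub, F_zero. Qed.

Lemma Cz0_F p : Cset p -> p (Fin.FS (Fin.FS Fin.F1)) = 0 -> Fface p.
Proof.
  intros Hp Hz.
  set (D := fun q : vec 3 => q (Fin.FS (Fin.FS Fin.F1)) < 0 \/ Fface q).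
  assert (HD : D p).
  { apply Hp.
    - intros x y t Hx Hy Ht. unfold D in *.
      destruct (Req_dec t 0) as [->|Ht0].
      + replace (vadd (vscale 0 x) (vscale (1 - 0) y)) with y; auto.
        apply functional_extensionality; intro j; unfold vadd, vscale; ring.
      + destruct (Req_dec t 1) as [->|Ht1].
        * replace (vadd (vscale 1 x) (vscale (1 - 1) y)) with x; auto.
          apply functional_extensionality; intro j; unfold vadd, vscale; ring.
        * unfold vadd, vscale.
          destruct Hx as [Hx|Hx]; destruct Hy as [Hy|Hy].
          -- left; nra.
          -- left; rewrite (F_z0 y Hy); nra.
          -- left; rewrite (F_z0 x Hx); nra.
          -- right; apply conv_convex; auto.
    - intros q [[t [Ht ->]]|[[t [Ht ->]]|[[t [Ht ->]]|[t [Ht ->]]]]]; unfold D.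
      + destruct (Req_dec t 0) as [->|Ht0]; [right; rewrite g1_0; apply F_zero|].
        left; destruct (trig_pos t ltac:(lra)); cbn; lra.
      + destruct (Req_dec t 0) as [->|Ht0]; [right; rewrite g2_0; apply F_zero|].
        left; destruct (trig_pos t ltac:(lra)); cbn; lra.
      + right; apply conv_incl; left; exists t; auto.
      + right; apply conv_incl; right; exists t; auto. }
  destruct HD as [HD|HD]; auto; lra.
Qed.

Lemma face_F : face Fface Cset.
Proof.
  split; [apply Fface_closed|split; [apply conv_convex|split; [apply Fface_sub|]]].
  intros x y z Hx Hy Hz [t [Ht ->]].
  assert (H0 := F_z0 _ Hx). unfold vadd, vscale in H0.
  assert (Hy' := C_z_le _ Hy). assert (Hz' := C_z_le _ Hz).
  assert (y (Fin.FS (Fin.FS Fin.F1)) = 0 /\ z (Fin.FS (Fin.FS Fin.F1)) = 0) as [E1 E2] by (split; nra).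
  split; apply Cz0_F; auto.
Qed.

Lemma small_t eps : 0 < eps -> exists t, 0 < t <= PI/4 /\ t < eps.
Proof.
  intro He. exists (Rmin (eps/2) (PI/4)). assert (H := PI_RGT_0).
  split; [split|]; [apply Rmin_glb_lt; lra|apply Rmin_r|]. eapply Rle_lt_trans; [apply Rmin_l|lra].
Qed.

Lemma g1_dir t : 0 < t <= PI/4 -> 0 <= (1 - cos t) / sin t <= sin t.
Proof.
  intro Ht. destruct (trig_pos t Ht) as [Hs Hc]. destruct (trig_facts t ltac:(lra)) as [_ [Hc0 [H2 _]]].
  assert (E : (1 - cos t) / sin t * sin t = 1 - cos t) by (field; lra).
  split.
  - unfold Rdiv; apply Rmult_le_pos; [lra|apply Rlt_le, Rinv_0_lt_compat; auto].
  - set (r := (1 - cos t) / sin t) in *. nra.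
Qed.

Lemma g_tan : tangent_cone vzero Cset gvec.
Proof.
  intros eps He. destruct (small_t eps He) as [t [Ht Hte]].
  destruct (trig_pos t Ht) as [Hs Hc]. destruct (trig_facts t ltac:(lra)) as [_ [_ [_ [_ [Hst _]]]]].
  assert (Hd := g1_dir t Ht).
  exists (vscale (/ sin t) (gamma1 t)). split.
  - exists (sin t); split; auto.
    replace (vadd vzero (vscale (sin t) (vscale (/ sin t) (gamma1 t)))) with (gamma1 t).
    + apply conv_incl; left; exists t; split; auto; lra.
    + apply functional_extensionality; intro j; unfold vadd, vscale, vzero; field; lra.
  - apply fin3_ind; unfold vscale, gvec; cbn.
    + rewrite Rmult_0_r, Rminus_diag, Rabs_R0; auto.
    + replace (-1 - / sin t * - sin t) with 0 by (field; lra). rewrite Rabs_R0; auto.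
    + replace (0 - / sin t * (cos t - 1)) with ((1 - cos t) / sin t) by (field; lra).
      rewrite Rabs_right by lra. lra.
Qed.

Lemma a_facts : sin (PI/4) = cos (PI/4) /\ cos (PI/4) * cos (PI/4) = 1/2 /\ 0 < cos (PI/4).
Proof.
  assert (E : sin (PI/4) = cos (PI/4)) by (rewrite sin_PI4, cos_PI4; auto).
  destruct (trig_pos (PI/4) PI4_bounds) as [Hs _].
  destruct (trig_facts (PI/4) ltac:(assert (H := PI_RGT_0); lra)) as [_ [_ [H2 _]]].
  rewrite E in *. split; auto. split; [lra|auto].
Qed.

Lemma g_comb : gvec = vadd (vscale ((1 - cos (PI/4)) / (2 * cos (PI/4) - 1)) (gamma3 (PI/4)))
                           (vscale (- cos (PI/4) / (2 * cos (PI/4) - 1)) (gamma4 (PI/4))).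
Proof.
  destruct a_facts as [E [H2 Hp]].
  assert (Hn : 2 * cos (PI/4) - 1 <> 0) by nra.
  apply vec3_ext; unfold vadd, vscale, gvec; cbn; rewrite ?E; field; auto.
Qed.

Lemma g_span : span Fface gvec.
Proof.
  intros V [H0 [Hadd Hsc]] HF. rewrite g_comb. apply Hadd; apply Hsc; apply HF, conv_incl.
  - left; exists (PI/4); split; auto; assert (H := PI_RGT_0); lra.
  - right; exists (PI/4); split; auto; assert (H := PI_RGT_0); lra.
Qed.

Lemma g_not_tanF : ~ tangent_cone vzero Fface gvec.
Proof.
  intro H. destruct (H (1/2) ltac:(lra)) as [y [[e [He Hy]] Hc]].
  apply F_y in Hy. unfold vadd, vscale, vzero in Hy.
  specialize (Hc (Fin.FS Fin.F1)). unfold gvec in Hc; cbn in Hc.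
  apply Rabs_def2 in Hc. nra.
Qed.

Definition Lc (C' : set_ 3) : set_ 4 :=
  fun w => exists lam c, 0 <= lam /\ C' c /\ w = vscale lam (lift1 c).

Lemma cone_lift_eq (C' : set_ 3) : convex C' ->
  cone (fun p => exists c, C' c /\ p = lift1 c) = Lc C'.
Proof.
  intro HC. apply functional_extensionality; intro w; apply propositional_extensionality; split.
  - intros [lam [s [Hl [Hs ->]]]].
    assert (Hs' : exists c, C' c /\ s = lift1 c).
    { apply Hs.
      - intros x y t [c1 [H1 ->]] [c2 [H2 ->]] Ht.
        exists (vadd (vscale t c1) (vscale (1 - t) c2)); split; [apply HC; auto|].
        apply vec4_ext; unfold vadd, vscale, lift1; cbn; ring.
      - intros p Hp; exact Hp. }
    destruct Hs' as [c [Hc ->]]. exists lam, c; auto.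
  - intros [lam [c [Hl [Hc ->]]]]. exists lam, (lift1 c); split; auto; split; auto.
    apply conv_incl; exists c; auto.
Qed.

Lemma Kcone_eq : Kcone = Lc Cset.
Proof. unfold Kcone; apply cone_lift_eq, conv_convex. Qed.

Lemma Lc_convex (C' : set_ 3) : convex C' -> C' vzero -> convex (Lc C').
Proof.
  intros HC H0 x y t [l1 [c1 [Hl1 [H1 ->]]]] [l2 [c2 [Hl2 [H2 ->]]]] Ht.
  set (L := t * l1 + (1 - t) * l2).
  destruct (Req_dec L 0) as [HL|HL].
  - assert (t * l1 = 0 /\ (1 - t) * l2 = 0) as [E1 E2] by (unfold L in HL; split; nra).
    exists 0, vzero; split; [lra|split; auto].
    apply vec4_ext; unfold vadd, vscale, lift1; cbn;
      rewrite <- !Rmult_assoc, ?E1; replace ((1 - t) * l2) with 0 by lra; ring.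
  - assert (HLp : 0 < L) by (unfold L in *; nra).
    set (s := t * l1 / L).
    assert (Hs : 0 <= s <= 1).
    { unfold s; split; [apply Rmult_le_pos; [nra|apply Rlt_le, Rinv_0_lt_compat; auto]|].
      apply (Rmult_le_reg_r L); auto. unfold Rdiv; rewrite Rmult_assoc, Rinv_l by lra. unfold L; nra. }
    exists L, (vadd (vscale s c1) (vscale (1 - s) c2)); split; [lra|split; [apply HC; auto|]].
    apply vec4_ext; unfold vadd, vscale, lift1, s, L in *; cbn; field; auto.
Qed.

Lemma Lc_cone (C' : set_ 3) : is_cone (Lc C').
Proof.
  intros a x Ha [l [c [Hl [Hc ->]]]]. exists (a * l), c; split; [nra|split; auto].
  apply functional_extensionality; intro j; unfold vscale; ring.
Qed.

Lemma Lc_mono (A B : set_ 3) : subset A B -> subset (Lc A) (Lc B).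
Proof. intros H w [l [c [Hl [Hc ->]]]]; exists l, c; auto. Qed.

Lemma small_zero a : (forall eps, 0 < eps -> Rabs a < 2 * eps) -> a = 0.
Proof.
  intro H. destruct (Req_dec a 0) as [|Hn]; auto.
  assert (Ha := Rabs_pos_lt a Hn). specialize (H (Rabs a / 4) ltac:(lra)). lra.
Qed.

Lemma Lc_closed (C' : set_ 3) : closed C' -> C' vzero -> (forall c, C' c -> forall j, -1 <= c j <= 1) ->
  closed (Lc C').
Proof.
  intros Hcl H0 Hb w Hw.
  set (w4 := w (Fin.FS (Fin.FS (Fin.FS Fin.F1)))).
  assert (Hw4 : forall eps, 0 < eps -> exists lam c, 0 <= lam /\ C' c /\
     Rabs (w Fin.F1 - lam * c Fin.F1) < eps /\ Rabs (w (Fin.FS Fin.F1) - lam * c (Fin.FS Fin.F1)) < eps /\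
     Rabs (w (Fin.FS (Fin.FS Fin.F1)) - lam * c (Fin.FS (Fin.FS Fin.F1))) < eps /\ Rabs (w4 - lam) < eps).
  { intros eps He. destruct (Hw eps He) as [y [[lam [c [Hl [Hc ->]]]] Hy]].
    exists lam, c; split; auto; split; auto.
    assert (E1 := Hy Fin.F1); assert (E2 := Hy (Fin.FS Fin.F1)); assert (E3 := Hy (Fin.FS (Fin.FS Fin.F1)));
    assert (E4 := Hy (Fin.FS (Fin.FS (Fin.FS Fin.F1)))).
    unfold vscale, lift1 in *; cbn in *. unfold w4. rewrite Rmult_1_r in E4. auto. }
  assert (Hnn : 0 <= w4).
  { destruct (Rle_dec 0 w4) as [|Hn]; auto. destruct (Hw4 (- w4) ltac:(lra)) as [lam [c [Hl [_ [_ [_ [_ H4]]]]]]].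
    apply Rabs_def2 in H4. lra. }
  destruct (Req_dec w4 0) as [Hz|Hpos].
  - assert (Hcoord : forall (j : Fin.t 3) (wj : R),
       (forall eps, 0 < eps -> exists lam c, 0 <= lam /\ C' c /\ Rabs (wj - lam * c j) < eps /\ Rabs (w4 - lam) < eps) -> wj = 0).
    { intros j wj H. apply small_zero. intros eps He. destruct (H eps He) as [lam [c [Hl [Hc [Ha Hb4]]]]].
      assert (Hcj := Hb c Hc j). rewrite Hz in Hb4. apply Rabs_def2 in Ha; apply Rabs_def2 in Hb4.
      apply Rabs_def1; nra. }
    assert (Z1 : w Fin.F1 = 0).
    { apply (Hcoord Fin.F1). intros eps He; destruct (Hw4 eps He) as [lam [c [? [? [? [? [? ?]]]]]]]; exists lam, c; auto. }
    assert (Z2 : w (Fin.FS Fin.F1) = 0).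
    { apply (Hcoord (Fin.FS Fin.F1)). intros eps He; destruct (Hw4 eps He) as [lam [c [? [? [? [? [? ?]]]]]]]; exists lam, c; auto. }
    assert (Z3 : w (Fin.FS (Fin.FS Fin.F1)) = 0).
    { apply (Hcoord (Fin.FS (Fin.FS Fin.F1))). intros eps He; destruct (Hw4 eps He) as [lam [c [? [? [? [? [? ?]]]]]]]; exists lam, c; auto. }
    exists 0, vzero; split; [lra|split; auto].
    apply vec4_ext; unfold vscale, lift1; cbn; [rewrite Z1|rewrite Z2|rewrite Z3|fold w4; rewrite Hz]; ring.
  - assert (Hp : 0 < w4) by lra.
    set (cs := mk3 (w Fin.F1 / w4) (w (Fin.FS Fin.F1) / w4) (w (Fin.FS (Fin.FS Fin.F1)) / w4)).
    assert (Hcs : C' cs).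
    { apply Hcl. intros eps He.
      destruct (Hw4 (eps * w4 / 4) ltac:(apply Rmult_lt_0_compat; [nra|lra])) as [lam [c [Hl [Hc [A1 [A2 [A3 A4]]]]]]].
      exists c; split; auto.
      assert (key : forall a b, -1 <= b <= 1 -> Rabs (a - lam * b) < eps * w4 / 4 -> Rabs (a / w4 - b) < eps).
      { intros a b Hbb Hab. apply Rabs_def2 in Hab; apply Rabs_def2 in A4.
        replace (a / w4 - b) with ((a - lam * b + (lam - w4) * b) / w4) by (field; lra).
        apply Rabs_def1.
        - apply (Rmult_lt_reg_r w4); auto. unfold Rdiv; rewrite Rmult_assoc, Rinv_l by lra. nra.
        - apply (Rmult_lt_reg_r w4); auto. unfold Rdiv; rewrite Rmult_assoc, Rinv_l by lra. nra. }
      apply fin3_ind; unfold cs; cbn; apply key; auto; apply Hb; auto. }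
    exists w4, cs; split; [lra|split; auto].
    apply vec4_ext; unfold vscale, lift1, cs; cbn; fold w4; field; lra.
Qed.

Lemma F_bound c : Fface c -> forall j, -1 <= c j <= 1.
Proof. intro H; apply C_bound, Fface_sub, H. Qed.

Definition Fp := Lc Fface.
Definition x0 : vec 4 := lift1 vzero.
Definition dvec : vec 4 := mk4 0 (-1) 0 0.

Lemma Lc_in (C' : set_ 3) c : C' c -> Lc C' (lift1 c).
Proof. intro H; exists 1, c; split; [lra|split; auto]. apply functional_extensionality; intro; unfold vscale; ring. Qed.

Lemma Lc_coord3 (C' : set_ 3) w : Lc C' w -> exists lam c, 0 <= lam /\ C' c /\
   w (Fin.FS Fin.F1) = lam * c (Fin.FS Fin.F1) /\
   w (Fin.FS (Fin.FS Fin.F1)) = lam * c (Fin.FS (Fin.FS Fin.F1)).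
Proof. intros [lam [c [Hl [Hc ->]]]]; exists lam, c; repeat split; auto. Qed.

Lemma face_Fp : face Fp (Lc Cset).
Proof.
  split; [apply Lc_closed; [apply Fface_closed|apply F_zero|apply F_bound]|].
  split; [apply Lc_convex; [apply conv_convex|apply F_zero]|].
  split; [apply Lc_mono, Fface_sub|].
  intros x y z Hx Hy Hz [t [Ht ->]].
  destruct (Lc_coord3 _ _ Hx) as [l0 [c0 [_ [Hc0 [_ E0]]]]].
  rewrite (F_z0 _ Hc0), Rmult_0_r in E0. unfold vadd, vscale in E0.
  assert (Hthird : forall w, Lc Cset w -> w (Fin.FS (Fin.FS Fin.F1)) <= 0 /\
            (w (Fin.FS (Fin.FS Fin.F1)) = 0 -> Fp w)).
  { intros w [lam [c [Hl [Hc ->]]]]. unfold vscale, lift1; cbn.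
    assert (Hz' := C_z_le _ Hc). split; [nra|]. intro E.
    destruct (Req_dec lam 0) as [->|Hn].
    - exists 0, vzero; split; [lra|split; [apply F_zero|]].
      apply functional_extensionality; intro j; unfold vscale; ring.
    - exists lam, c; split; auto; split; auto. apply Cz0_F; auto.
      apply (Rmult_eq_reg_l lam); auto; lra. }
  destruct (Hthird y Hy) as [Ly Fy]; destruct (Hthird z Hz) as [Lz Fz].
  split; [apply Fy|apply Fz]; nra.
Qed.

Lemma Fp_neq : ~ set_eq Fp (Lc Cset).
Proof.
  intro H. assert (Hin : Lc Cset (lift1 (gamma1 (PI/4)))).
  { apply Lc_in, conv_incl; left; exists (PI/4); split; auto; assert (HP := PI_RGT_0); lra. }
  apply H in Hin. destruct (Lc_coord3 _ _ Hin) as [l [c [_ [Hc [_ E]]]]].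
  rewrite (F_z0 _ Hc), Rmult_0_r in E. cbn in E.
  destruct (trig_pos (PI/4) PI4_bounds). lra.
Qed.

Lemma x0_in : Fp x0.
Proof. apply Lc_in, F_zero. Qed.

Lemma d_tan : tangent_cone x0 (Lc Cset) dvec.
Proof.
  intros eps He. destruct (small_t eps He) as [t [Ht Hte]].
  destruct (trig_pos t Ht) as [Hs Hc]. destruct (trig_facts t ltac:(lra)) as [_ [_ [_ [_ [Hst _]]]]].
  assert (Hd := g1_dir t Ht).
  exists (mk4 0 (-1) ((cos t - 1) / sin t) 0). split.
  - exists (sin t); split; auto.
    replace (vadd x0 (vscale (sin t) (mk4 0 (-1) ((cos t - 1) / sin t) 0))) with (lift1 (gamma1 t)).
    + apply Lc_in, conv_incl; left; exists t; split; auto; lra.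
    + apply vec4_ext; unfold vadd, vscale, x0, lift1, vzero; cbn; field; lra.
  - apply fin4_ind; unfold dvec; cbn.
    + rewrite Rminus_diag, Rabs_R0; auto.
    + rewrite Rminus_diag, Rabs_R0; auto.
    + replace (0 - (cos t - 1) / sin t) with ((1 - cos t) / sin t) by (field; lra).
      rewrite Rabs_right by lra. lra.
    + rewrite Rminus_diag, Rabs_R0; auto.
Qed.

Lemma d_span : span Fp dvec.
Proof.
  intros V [H0 [Hadd Hsc]] HF.
  destruct a_facts as [E [H2 Hp]].
  assert (Hn : 2 * cos (PI/4) - 1 <> 0) by nra.
  set (al := (1 - cos (PI/4)) / (2 * cos (PI/4) - 1)).
  set (be := - cos (PI/4) / (2 * cos (PI/4) - 1)).
  assert (HP := PI_RGT_0).
  assert (V3 : V (lift1 (gamma3 (PI/4)))) by (apply HF, Lc_in, conv_incl; left; exists (PI/4); split; auto; lra).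
  assert (V4 : V (lift1 (gamma4 (PI/4)))) by (apply HF, Lc_in, conv_incl; right; exists (PI/4); split; auto; lra).
  assert (V0 : V x0) by (apply HF, x0_in).
  replace dvec with (vadd (vadd (vscale al (lift1 (gamma3 (PI/4)))) (vscale be (lift1 (gamma4 (PI/4)))))
                          (vscale (- (al + be)) x0)).
  - apply Hadd; [apply Hadd|]; apply Hsc; auto.
  - apply vec4_ext; unfold vadd, vscale, x0, lift1, vzero, dvec, al, be; cbn; rewrite ?E; field; auto.
Qed.

Lemma d_not_tan : ~ tangent_cone x0 Fp dvec.
Proof.
  intro H. destruct (H (1/2) ltac:(lra)) as [y [[e [He Hy]] Hc]].
  destruct (Lc_coord3 _ _ Hy) as [l [c [Hl [Hcc [E _]]]]].
  assert (Hyc := F_y _ Hcc). unfold vadd, vscale, x0, lift1, vzero in E; cbn in E.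
  specialize (Hc (Fin.FS Fin.F1)). unfold dvec in Hc; cbn in Hc.
  apply Rabs_def2 in Hc. nra.
Qed.

Lemma not_TE : ~ tangentially_exposed (Lc Cset).
Proof.
  intro H. apply d_not_tan.
  apply (proj1 (H Fp face_Fp Fp_neq x0 x0_in dvec)). split; [apply d_tan|apply d_span].
Qed.

Lemma dot4 (x y : vec 4) : dot x y =
  x Fin.F1 * y Fin.F1 + x (Fin.FS Fin.F1) * y (Fin.FS Fin.F1) +
  x (Fin.FS (Fin.FS Fin.F1)) * y (Fin.FS (Fin.FS Fin.F1)) +
  x (Fin.FS (Fin.FS (Fin.FS Fin.F1))) * y (Fin.FS (Fin.FS (Fin.FS Fin.F1))).
Proof. cbn. ring. Qed.

Definition wvec : vec 4 := mk4 0 1 0 0.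

Lemma w_not_msum : ~ msum (dual_cone (Lc Cset)) (orth Fp) wvec.
Proof.
  intros [k [f [Hk [Hf E]]]].
  assert (Ek : forall j, k j = wvec j - f j) by (intro j; rewrite E; unfold vadd; ring).
  destruct a_facts as [Ea [H2 Hp]].
  assert (HP := PI_RGT_0).
  assert (O0 := Hf x0 x0_in). rewrite dot4 in O0. unfold x0, lift1, vzero in O0; cbn in O0.
  assert (F3 : Fface (gamma3 (PI/4))) by (apply conv_incl; left; exists (PI/4); split; auto; lra).
  assert (F4 : Fface (gamma4 (PI/4))) by (apply conv_incl; right; exists (PI/4); split; auto; lra).
  assert (O3 := Hf _ (Lc_in _ _ F3)). assert (O4 := Hf _ (Lc_in _ _ F4)).
  rewrite dot4 in O3, O4. unfold lift1 in O3, O4; cbn in O3, O4. rewrite Ea in O3, O4.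
  assert (f3 : f (Fin.FS (Fin.FS (Fin.FS Fin.F1))) = 0) by lra.
  assert (f1 : f (Fin.FS Fin.F1) = 0).
  { rewrite f3 in O3, O4. set (a := cos (PI/4)) in *.
    set (u := f Fin.F1) in *. set (v := f (Fin.FS Fin.F1)) in *.
    assert (v * (2 * a - 1) = 0) by nra.
    assert (2 * a - 1 <> 0) by nra.
    apply (Rmult_eq_reg_r (2 * a - 1)); auto; lra. }
  set (f2 := f (Fin.FS (Fin.FS Fin.F1))).
  destruct (small_t (/ (Rabs f2 + 1)) ltac:(apply Rinv_0_lt_compat; assert (HH := Rabs_pos f2); lra)) as [t [Ht Hte]].
  destruct (trig_pos t Ht) as [Hs Hc]. destruct (trig_facts t ltac:(lra)) as [_ [_ [_ [_ [Hst _]]]]].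
  assert (Hd := g1_dir t Ht).
  assert (C1 : Cset (gamma1 t)) by (apply conv_incl; left; exists t; split; auto; lra).
  assert (Hk1 := Hk _ (Lc_in _ _ C1)).
  rewrite dot4, !Ek in Hk1. unfold lift1, wvec in Hk1; cbn in Hk1. rewrite f1, f3 in Hk1. fold f2 in Hk1.
  assert (Hq : 1 - cos t <= sin t * sin t).
  { assert (E1 : (1 - cos t) / sin t * sin t = 1 - cos t) by (field; lra). nra. }
  assert (Hab : Rabs f2 * sin t < 1).
  { assert (HH := Rabs_pos f2).
    assert (sin t * (Rabs f2 + 1) < 1).
    { assert (E1 : / (Rabs f2 + 1) * (Rabs f2 + 1) = 1) by (field; lra). nra. }
    nra. }
  assert (f2 * (1 - cos t) <= Rabs f2 * (sin t * sin t)).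
  { assert (HH := Rabs_pos f2). assert (f2 <= Rabs f2) by apply Rle_abs. nra. }
  nra.
Qed.

Lemma w_closure : closure (msum (dual_cone (Lc Cset)) (orth Fp)) wvec.
Proof.
  intros eps He. set (e := eps / 2). set (lam := 2 / e + 1).
  assert (Hee : 0 < e) by (unfold e; lra).
  assert (Hle : lam * e = 2 + e) by (unfold lam; field; lra).
  assert (Hl1 : 1 <= lam) by (unfold lam; assert (0 < 2 / e) by (unfold Rdiv; apply Rmult_lt_0_compat; [lra|apply Rinv_0_lt_compat; lra]); lra).
  exists (vadd (mk4 0 1 (- lam) e) (mk4 0 0 lam 0)). split.
  - exists (mk4 0 1 (- lam) e), (mk4 0 0 lam 0); split; [|split; auto].
    + intros u [mu [c [Hmu [Hc ->]]]]. rewrite dot4; unfold vscale, lift1; cbn.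
      assert (Hin : 0 <= lin3 0 1 (- lam) e c).
      { apply Cset_half; auto. intros t Ht.
        destruct (trig_facts t Ht) as [Hs [Hc0 [H2 [Hc1 [Hst Hs1]]]]].
        unfold lin3; cbn. repeat split.
        - assert (Hq : 2 * (1 - cos t) >= sin t * sin t) by nra.
          assert (e * (lam * (1 - cos t)) >= sin t * sin t) by nra.
          assert (e * (0 * 0 + 1 * - sin t + - lam * (cos t - 1) + e) >= 0) by nra.
          nra.
        - assert (Hq : 1 - cos t <= sin t * sin t) by nra. nra.
        - lra.
        - lra. }
      unfold lin3 in Hin. nra.
    + intros u [mu [c [Hmu [Hc ->]]]]. rewrite dot4; unfold vscale, lift1; cbn.
      rewrite (F_z0 _ Hc). ring.
  - apply fin4_ind; unfold wvec, vadd; cbn.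
    + replace (0 - (0 + 0)) with 0 by ring; rewrite Rabs_R0; auto.
    + replace (1 - (1 + 0)) with 0 by ring; rewrite Rabs_R0; auto.
    + replace (0 - (- lam + lam)) with 0 by ring; rewrite Rabs_R0; auto.
    + replace (0 - (e + 0)) with (- e) by ring. rewrite Rabs_Ropp, Rabs_right by lra. unfold e; lra.
Qed.

Lemma not_FDC : ~ facially_dual_complete (Lc Cset).
Proof.
  intro H. apply w_not_msum. apply (H Fp face_Fp (ex_intro _ x0 x0_in) Fp_neq). apply w_closure.
Qed.

Theorem mainTheorem6 :
  face Fface Cset /\ Fface vzero /\
  ~ set_eq (fun d => tangent_cone vzero Cset d /\ span Fface d) (tangent_cone vzero Fface) /\
  (tangent_cone vzero Cset gvec /\ span Fface gvec /\ ~ tangent_cone vzero Fface gvec) /\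
  (closed Kcone /\ convex Kcone /\ is_cone Kcone) /\
  ~ tangentially_exposed Kcone /\
  ~ facially_dual_complete Kcone.
Proof.
  rewrite Kcone_eq.
  split; [apply face_F|]. split; [apply F_zero|].
  split; [intro H; apply g_not_tanF, (proj1 (H gvec)); split; [apply g_tan|apply g_span]|].
  split; [split; [apply g_tan|split; [apply g_span|apply g_not_tanF]]|].
  split; [split; [apply Lc_closed; [apply Cset_closed|apply C_zero|apply C_bound]|split; [apply Lc_convex; [apply conv_convex|apply C_zero]|apply Lc_cone]]|].
  split; [apply not_TE|apply not_FDC].
Qed.
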